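(* Let $n\ge 2$ and let $q=(q_1,\dots,q_n)\in\mathbb{R}^n$ with $\sum_{i=1}^n q_i=1$ and $q_n\neq 0$. Let $Q_1$ be the $(n-1)\times(n-1)$ matrix with entries $(Q_1)_{ij}=q_i-\delta_{ij}$, and $Q_2$ the $(n-1)\times(n-1)$ matrix with entries $(Q_2)_{ij}=\frac{1}{q_n}(q_n\delta_{ij}+q_i)$. Let $A_0=(a_{ij})_{1\le i,j\le n-1}$ be any real $(n-1)\times(n-1)$ matrix and let $A$ be the $n\times n$ matrix whose entries are $a_{ij}$ for $i,j\le n-1$, $a_{in}=-\sum_{j=1}^{n-1}\frac{q_j}{q_n}a_{ij}$ for $i\le n-1$, and whose last row is zero. Let $\bar Q_1=(\bar q_{ij})$ be an $(n-1)\times(n-1)$ matrix such that $(\bar Q_1)^tQ_1$ is diagonal. If there exists $d=(d_1,\dots,d_{n-1})\in\mathbb{R}^{n-1}$ such that the matrix $\bar Q_1\,\mathrm{diag}(d_i)_i\,A_0\,Q_2$ is skew-symmetric, then the function $$H_D(u)=\sum_{i=1}^{n-1}d_i\Big(\sum_{k=1}^{n-1}\bar q_{ki}q_k\Big)u_i+\sum_{i=1}^{n-1}d_i\Big(\Big(\sum_{k=1}^{n-1}\bar q_{ki}q_k\Big)-\bar q_{ii}\Big)e^{u_i}$$ is a constant of motion of the vector field $\tilde X_B(u)=B\eta_q(u)$ on $\mathbb{R}^{n-1}$, where $B=-EAE^t$, and consequently $$H_D\circ\phi^{-1}(x)=\sum_{i=1}^{n-1}d_i\Big(\sum_{k=1}^{n-1}\bar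 q_{ki}q_k\Big)\log\Big(\frac{x_i}{x_n}\Big)+\sum_{i=1}^{n-1}d_i\Big(\Big(\sum_{k=1}^{n-1}\bar q_{ki}q_k\Big)-\bar q_{ii}\Big)\frac{x_i}{x_n}$$ is a constant of motion of the replicator vector field $X_A$ on the interior of $\Delta^{n-1}$.
   Context: $\Delta^{n-1}=\{x\in\mathbb{R}^n: x_i\ge 0,\ \sum_i x_i=1\}$. The replicator vector field with payoff matrix $A$ is $X_A(x)_i=x_i\big((Ax)_i-x^tAx\big)$ on $\Delta^{n-1}$. $E=[-I_{n-1}\mid\mathbb{1}]$ is the $(n-1)\times n$ matrix whose row $i$ has $-1$ in column $i$, $1$ in column $n$ and zeros elsewhere. $\eta_q(u)_i=q_i-\frac{e^{u_i}}{1+\sum_{j=1}^{n-1}e^{u_j}}$ for $u\in\mathbb{R}^{n-1}$, $1\le i\le n-1$. $\phi:\mathbb{R}^{n-1}\to(\Delta^{n-1})^\circ$ is the diffeomorphism $\phi(u)=\big(\frac{e^{u_1}}{1+\sum_j e^{u_j}},\dots,\frac{e^{u_{n-1}}}{1+\sum_j e^{u_j}},\frac{1}{1+\sum_j e^{u_j}}\big)$, so $\phi^{-1}(x)=(\log(x_i/x_n))_{i\le n-1}$; $\tilde X_B$ is the pullback of $X_A$ by $\phi$. A constant of motion is a function constant along integral curves. *)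

(* Defs.v *)
From HB Require Import structures.
From mathcomp Require Import all_boot all_order all_algebra.
From mathcomp Require Import all_classical all_reals all_analysis.
Set Implicit Arguments. Unset Strict Implicit. Unset Printing Implicit Defensive.
Import Order.TTheory GRing.Theory Num.Theory.
Import numFieldNormedType.Exports.
Local Open Scope classical_set_scope.
Local Open Scope ring_scope.

(* Convention: n = m.+1 (so n >= 2 iff 0 < m).  Indices 1..n-1 are 'I_m,
   indices 1..n are 'I_m.+1, the index n is ord_max. *)
Section Defs.
Variable R : realType.
Variable m : nat.

Definition iw (i : 'I_m) : 'I_m.+1 := widen_ord (leqnSn m) i.

Definition qs (q : 'I_m.+1 -> R) (i : 'I_m) : R := q (iw i).

Definition Q1 (q : 'I_m.+1 -> R) : 'M[R]_m :=
  \matrix_(i, j) (qs q i - (i == j)%:R).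

Definition Q2 (q : 'I_m.+1 -> R) : 'M[R]_m :=
  \matrix_(i, j) ((q ord_max * (i == j)%:R + qs q i) / q ord_max).

Definition Aext (q : 'I_m.+1 -> R) (A0 : 'M[R]_m) : 'M[R]_m.+1 :=
  \matrix_(i, j)
    match unlift ord_max i, unlift ord_max j with
    | Some i', Some j' => A0 i' j'
    | Some i', None => - \sum_(k < m) (qs q k / q ord_max) * A0 i' k
    | None, _ => 0
    end.

Definition Emx : 'M[R]_(m, m.+1) :=
  \matrix_(i, j) (if j == ord_max then 1 else if j == iw i then -1 else 0).

Definition Bmx (q : 'I_m.+1 -> R) (A0 : 'M[R]_m) : 'M[R]_m :=
  - (Emx *m Aext q A0 *m Emx^T).

Definition eta (q : 'I_m.+1 -> R) (u : 'I_m -> R) (i : 'I_m) : R :=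
  qs q i - expR (u i) / (1 + \sum_(j < m) expR (u j)).

Definition XtB (q : 'I_m.+1 -> R) (A0 : 'M[R]_m) (u : 'I_m -> R) (i : 'I_m) : R :=
  \sum_(j < m) Bmx q A0 i j * eta q u j.

Definition XA (A : 'M[R]_m.+1) (x : 'I_m.+1 -> R) (i : 'I_m.+1) : R :=
  x i * (\sum_(j < m.+1) A i j * x j
         - \sum_(k < m.+1) \sum_(j < m.+1) x k * A k j * x j).

Definition simplex_int : set ('I_m.+1 -> R) :=
  [set x | (forall i, 0 < x i) /\ \sum_(i < m.+1) x i = 1].

Definition cq (q : 'I_m.+1 -> R) (Qb : 'M[R]_m) (i : 'I_m) : R :=
  \sum_(k < m) Qb k i * qs q k.

Definition HD (q : 'I_m.+1 -> R) (Qb : 'M[R]_m) (d : 'rV[R]_m) (u : 'I_m -> R) : R :=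
  \sum_(i < m) d 0 i * cq q Qb i * u i
  + \sum_(i < m) d 0 i * (cq q Qb i - Qb i i) * expR (u i).

Definition HDx (q : 'I_m.+1 -> R) (Qb : 'M[R]_m) (d : 'rV[R]_m) (x : 'I_m.+1 -> R) : R :=
  \sum_(i < m) d 0 i * cq q Qb i * ln (x (iw i) / x ord_max)
  + \sum_(i < m) d 0 i * (cq q Qb i - Qb i i) * (x (iw i) / x ord_max).

End Defs.

Definition constant_of_motion {R : realType} {k : nat}
  (D : set ('I_k -> R)) (X : ('I_k -> R) -> ('I_k -> R)) (H : ('I_k -> R) -> R) :=
  forall (a b : R) (u : R -> 'I_k -> R),
    (forall t, a < t < b ->
       D (u t) /\ forall i, is_derive t 1 (fun s => u s i) (X (u t) i)) ->
    forall s t, a < s < b -> a < t < b -> H (u s) = H (u t).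

(* Main.v *)
Require Import Defs.
From HB Require Import structures.
From mathcomp Require Import all_boot all_order all_algebra.
From mathcomp Require Import all_classical all_reals all_analysis.
From mathcomp Require Import ring lra.
Import Order.TTheory GRing.Theory Num.Theory.
Local Open Scope classical_set_scope.
Local Open Scope ring_scope.

Section Alg.
Variables (R : realType) (m : nat) (q : 'I_m.+1 -> R).
Hypothesis hq1 : \sum_(i < m.+1) q i = 1.
Hypothesis hqn : q ord_max != 0.
Variables (A0 Qb : 'M[R]_m) (d : 'rV[R]_m).
Hypothesis hQb : is_diag_mx (Qb^T *m Q1 q).
Hypothesis hskew : (Qb *m diag_mx d *m A0 *m Q2 q)^T = - (Qb *m diag_mx d *m A0 *m Q2 q).

Lemma iw_lift (i : 'I_m) : iw i = lift ord_max i.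
Proof. apply: val_inj => /=. rewrite /bump leqNgt ltn_ord. by []. Qed.

Lemma sum_qs : \sum_(k < m) qs q k = 1 - q ord_max.
Proof. by move: hq1; rewrite big_ord_recr /= => <-; rewrite addrK. Qed.

Definition vv (r : 'I_m -> R) : 'rV[R]_m :=
  \row_k ((1 + \sum_(j < m) r j) * qs q k - r k).

Lemma Qb_off (k i : 'I_m) : k != i -> Qb k i = cq q Qb i.
Proof.
move=> ki; have := (is_diag_mxP hQb) i k; rewrite eq_sym ki => /(_ isT).
rewrite !mxE.
under eq_bigr do rewrite !mxE mulrBr.
rewrite sumrB /cq.
rewrite [X in _ - X](bigD1 k) //= eqxx [\sum_(i0 < m | i0 != k) _]big1; last by move=> j jk; rewrite (negbTE jk) mulr0.
rewrite addr0 mulr1 => /eqP; rewrite subr_eq0 => /eqP <-.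
by apply: eq_bigr => j _; rewrite mulrC.
Qed.

Lemma key1 (r : 'I_m -> R) (i : 'I_m) :
  (vv r *m Qb) 0 i = cq q Qb i + (cq q Qb i - Qb i i) * r i.
Proof.
rewrite mxE.
under eq_bigr do rewrite mxE mulrBl.
rewrite sumrB.
have -> : \sum_(k < m) (1 + \sum_(j < m) r j) * qs q k * Qb k i
   = (1 + \sum_(j < m) r j) * cq q Qb i.
  by rewrite /cq mulr_sumr; apply: eq_bigr => k _; ring.
have -> : \sum_(k < m) r k * Qb k i = r i * Qb i i + cq q Qb i * (\sum_(j < m) r j - r i).
  rewrite (bigD1 i) //= [\sum_(j < m) r j](bigD1 i) //= addrAC subrr add0r mulr_sumr.
  by congr (_ + _); apply: eq_bigr => k ki; rewrite Qb_off // mulrC.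
ring.
Qed.

Lemma key3 (r : 'I_m -> R) (j : 'I_m) :
  (Q2 q *m (vv r)^T) j 0 = qs q j / q ord_max - r j.
Proof.
rewrite mxE.
rewrite (eq_bigr (fun k => (j == k)%:R * ((1 + \sum_(l < m) r l) * qs q k - r k)
     + qs q j / q ord_max * ((1 + \sum_(l < m) r l) * qs q k - r k))); last first.
  by move=> k _; rewrite !mxE; field.
rewrite big_split /= (bigD1 j) //= eqxx [\sum_(i0 < m | i0 != j) _]big1; last first.
  by move=> k kj; rewrite eq_sym (negbTE kj) mul0r.
rewrite addr0 mul1r -mulr_sumr sumrB -mulr_sumr sum_qs.
by field.
Qed.

Lemma vMv0 (r : 'I_m -> R) :
  (vv r *m (Qb *m diag_mx d *m A0 *m Q2 q) *m (vv r)^T) 0 0 = 0.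
Proof.
set M := (Qb *m diag_mx d *m A0 *m Q2 q).
set y := (vv r *m M *m (vv r)^T) 0 0.
have : y = - y.
  rewrite {1}(_ : y = ((vv r *m M *m (vv r)^T)^T) 0 0); last by rewrite mxE.
  by rewrite trmx_mul trmxK trmx_mul hskew mulNmx mulmxN mxE mulmxA.
move/eqP; rewrite -subr_eq0 opprK -mulr2n mulrn_eq0 /= => /eqP //.
Qed.

Lemma core (r : 'I_m -> R) :
  \sum_(i < m) d 0 i * (cq q Qb i + (cq q Qb i - Qb i i) * r i)
     * (\sum_(j < m) A0 i j * (r j - qs q j / q ord_max)) = 0.
Proof.
have := vMv0 r.
rewrite (_ : vv r *m (Qb *m diag_mx d *m A0 *m Q2 q) *m (vv r)^T
   = (vv r *m Qb *m diag_mx d) *m (A0 *m (Q2 q *m (vv r)^T))); last by rewrite !mulmxA.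
rewrite mxE.
move=> h; transitivity (- (0:R)); last by rewrite oppr0.
rewrite -[X in - X]h -sumrN.
apply: eq_bigr => i _.
rewrite mul_mx_diag mxE [(A0 *m _) i 0]mxE key1.
rewrite (_ : \sum_j A0 i j * (Q2 q *m (vv r)^T) j 0
   = - \sum_(j < m) A0 i j * (r j - qs q j / q ord_max)); first by ring.
by rewrite -sumrN; apply: eq_bigr => j _; rewrite key3 -mulrN opprB.
Qed.

Lemma iw_max (l : 'I_m) : (iw l == ord_max) = false.
Proof. by rewrite -val_eqE /= (ltn_eqF (ltn_ord l)). Qed.

Lemma iw_eq (l i : 'I_m) : (iw l == iw i) = (l == i).
Proof. by rewrite -val_eqE /= val_eqE. Qed.

Lemma Eiw (i l : 'I_m) : Emx R m i (iw l) = - (l == i)%:R.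
Proof. by rewrite mxE iw_max iw_eq; case: (l == i); rewrite ?oppr0. Qed.

Lemma Emax (i : 'I_m) : Emx R m i ord_max = 1.
Proof. by rewrite mxE eqxx. Qed.

Lemma Aext_iw (i k : 'I_m) : Aext q A0 (iw i) (iw k) = A0 i k.
Proof. by rewrite mxE !iw_lift !liftK. Qed.

Lemma Aext_iwmax (i : 'I_m) :
  Aext q A0 (iw i) ord_max = - \sum_(k < m) (qs q k / q ord_max) * A0 i k.
Proof. by rewrite mxE iw_lift liftK unlift_none. Qed.

Lemma Aext_max (k : 'I_m.+1) : Aext q A0 ord_max k = 0.
Proof. by rewrite mxE unlift_none. Qed.

Lemma sum_delta (F : 'I_m -> R) (i : 'I_m) :
  \sum_(l < m) (l == i)%:R * F l = F i.
Proof.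
rewrite (bigD1 i) //= eqxx mul1r [\sum_(l < m | l != i) _]big1 ?addr0 //.
by move=> l li; rewrite (negbTE li) mul0r.
Qed.

Lemma EA (i : 'I_m) (k : 'I_m.+1) :
  (Emx R m *m Aext q A0) i k = - Aext q A0 (iw i) k.
Proof.
rewrite mxE big_ord_recr /= Aext_max mulr0 addr0.
rewrite -(sum_delta (fun l => Aext q A0 (iw l) k)) -sumrN.
by apply: eq_bigr => l _; rewrite Eiw mulNr.
Qed.

Lemma Bmx_eq : Bmx q A0 = - (A0 *m Q2 q).
Proof.
apply/matrixP => i j; rewrite !mxE; congr (- _).
rewrite big_ord_recr /=.
under eq_bigr => k _ do rewrite EA -[widen_ord _ k]/(iw k) [(Emx R m)^T _ _]mxE Eiw Aext_iw.
rewrite EA [(Emx R m)^T _ _]mxE Emax Aext_iwmax mulr1 opprK.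
under [RHS]eq_bigr do rewrite mxE.
rewrite (eq_bigr (fun k => (k == j)%:R * A0 i k)); last by move=> k _; rewrite mulrNN mulrC.
rewrite sum_delta.
rewrite [RHS](eq_bigr (fun k => (k == j)%:R * A0 i k + qs q k / q ord_max * A0 i k)); last first.
  by move=> k _; field.
by rewrite big_split /= sum_delta.
Qed.

Lemma lam_gt0 (u : 'I_m -> R) : 0 < 1 + \sum_(j < m) expR (u j).
Proof. by apply: ltr_pwDl => //; apply: sumr_ge0 => j _; exact: expR_ge0. Qed.

Lemma XtB_eq (u : 'I_m -> R) (i : 'I_m) :
  XtB q A0 u i = (1 + \sum_(j < m) expR (u j))^-1 *
     \sum_(j < m) A0 i j * (expR (u j) - qs q j / q ord_max).
Proof.
have l0 := lam_gt0 u.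
set r := fun j => expR (u j).
have h1 : ((A0 *m Q2 q) *m (vv r)^T) i 0 = \sum_(j < m) (A0 *m Q2 q) i j * vv r 0 j.
  by rewrite mxE; apply: eq_bigr => j _; rewrite [(_^T) _ _]mxE.
rewrite -mulmxA mxE in h1.
rewrite /XtB Bmx_eq.
rewrite (eq_bigr (fun j => - (1 + \sum_(j < m) expR (u j))^-1 * ((A0 *m Q2 q) i j * vv r 0 j))); last first.
  move=> j _; rewrite /Defs.eta !mxE /r; field.
  by rewrite gt_eqF.
rewrite -mulr_sumr -h1 mulNr -mulrN -sumrN; congr (_ * _).
by apply: eq_bigr => j _; rewrite key3 -mulrN opprB.
Qed.

End Alg.

Section Ana.
Variable R : realType.

Lemma dsum n (F : 'I_n -> R -> R) (dF : 'I_n -> R) (t : R) :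
  (forall i, is_derive t 1 (F i) (dF i)) ->
  is_derive t 1 (fun s => \sum_(i < n) F i s) (\sum_(i < n) dF i).
Proof. by move=> h; have := is_derive_sum h; rewrite fct_sumE. Qed.

Lemma dadd (f g : R -> R) (df dg t : R) :
  is_derive t 1 f df -> is_derive t 1 g dg ->
  is_derive t 1 (fun s => f s + g s) (df + dg).
Proof. by move=> hf hg; exact: is_deriveD. Qed.

Lemma dmul (f g : R -> R) (df dg t : R) :
  is_derive t 1 f df -> is_derive t 1 g dg ->
  is_derive t 1 (fun s => f s * g s) (f t * dg + g t * df).
Proof. by move=> hf hg; exact: is_deriveM. Qed.

Lemma dmulc (f : R -> R) (k df t : R) :
  is_derive t 1 f df -> is_derive t 1 (fun s => k * f s) (k * df).
Proof.
move=> hf; have := @dmul (cst k) f 0 df t (is_derive_cst k t 1) hf.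
by rewrite mulr0 addr0.
Qed.

Lemma dexp (f : R -> R) (df t : R) :
  is_derive t 1 f df -> is_derive t 1 (fun s => expR (f s)) (expR (f t) * df).
Proof. by move=> hf; exact: (is_derive1_comp (f := expR)). Qed.

Lemma dln (f : R -> R) (df t : R) : 0 < f t ->
  is_derive t 1 f df -> is_derive t 1 (fun s => ln (f s)) ((f t)^-1 * df).
Proof. by move=> hp hf; have := is_derive1_comp (is_derive1_ln hp) hf. Qed.

Lemma dinv (f : R -> R) (df t : R) : f t != 0 ->
  is_derive t 1 f df -> is_derive t 1 (fun s => (f s)^-1) (- (f t) ^- 2 * df).
Proof. by move=> hp hf; exact: is_deriveV. Qed.

Lemma cst_interval (h : R -> R) (a b : R) :
  (forall t, a < t < b -> is_derive t 1 h 0) ->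
  forall s t, a < s < b -> a < t < b -> h s = h t.
Proof.
move=> hd s t.
wlog st : s t / s <= t.
  move=> H hs ht; case: (leP s t) => [st|ts]; first exact: H.
  by apply/esym/H => //; exact: ltW.
move=> /andP[ha_s hs_b] /andP[ha_t ht_b].
have hin x : s <= x <= t -> a < x < b.
  by move=> /andP[sx xt]; apply/andP; split; [exact: (lt_le_trans ha_s) | exact: (le_lt_trans xt ht_b)].
have hd' : forall x, x \in `]s, t[ -> is_derive x 1 h ((fun _ => 0) x).
  move=> x; rewrite in_itv /= => /andP[sx xt]; apply: hd; apply: hin.
  by rewrite !ltW.
have M := @MVT_segment R h (fun _ => 0) s t st hd'.
have [c _ e] : exists2 c, c \in `[s, t] & h t - h s = 0 * (t - s).
  apply: M; apply: derivable_within_continuous => x; rewrite in_itv /= => /andP[sx xt].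
  have hx : a < x < b by apply: hin; rewrite sx xt.
  by have [] := hd x hx.
by apply/eqP; move: e; rewrite mul0r => /eqP; rewrite subr_eq0 eq_sym.
Qed.
End Ana.

Theorem corollary3p2 (R : realType) (m : nat) (hm : (0 < m)%N)
  (q : 'I_m.+1 -> R) (hq1 : \sum_(i < m.+1) q i = 1) (hqn : q ord_max != 0)
  (A0 : 'M[R]_m) (Qb : 'M[R]_m)
  (hQb : is_diag_mx (Qb^T *m Q1 q))
  (d : 'rV[R]_m)
  (hskew : (Qb *m diag_mx d *m A0 *m Q2 q)^T = - (Qb *m diag_mx d *m A0 *m Q2 q)) :
  constant_of_motion setT (XtB q A0) (HD q Qb d) /\
  constant_of_motion (@simplex_int R m) (XA (Aext q A0)) (HDx q Qb d).
Proof.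
split.
- move=> a b u hu s t hs ht.
  apply: (@cst_interval R (fun s => HD q Qb d (u s)) a b) => // t0 ht0.
  have [_ hd] := hu t0 ht0.
  apply: is_derive_eq.
    by rewrite /HD; apply: dadd; apply: dsum => i; apply: dmulc.
  have l0 := @lam_gt0 R m (u t0).
  have C := @core R m q hq1 hqn A0 Qb d hQb hskew (fun j => expR (u t0 j)).
  transitivity ((1 + \sum_(j < m) expR (u t0 j))^-1 * 0); last by rewrite mulr0.
  rewrite -[X in _ = _ * X]C mulr_sumr -big_split.
  apply: eq_bigr => i _ /=.
  have sc : forall a b : R, a *: b = a * b by [].
  rewrite !sc (@XtB_eq R m q hq1 hqn A0); ring.
- move=> a b x hx s t hs ht.
  apply: (@cst_interval R (fun s => HDx q Qb d (x s)) a b) => // t0 ht0.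
  have [[xpos xsum] hd] := hx t0 ht0.
  have xn0 : x t0 ord_max != 0 by rewrite gt_eqF.
  have xi0 i : x t0 (iw i) != 0 by rewrite gt_eqF.
  apply: is_derive_eq.
    rewrite /HDx; apply: dadd; apply: dsum => i; apply: dmulc.
    by apply: dln; rewrite divr_gt0.
  set T := \sum_(k < m.+1) \sum_(j < m.+1) x t0 k * Aext q A0 k j * x t0 j.
  set rho := fun j => x t0 (iw j) / x t0 ord_max.
  have hXn : XA (Aext q A0) (x t0) ord_max = x t0 ord_max * (- T).
    rewrite /XA big1 ?sub0r // => j _; by rewrite Aext_max mul0r.
  have hP i : \sum_(j < m.+1) Aext q A0 (iw i) j * x t0 j
      = x t0 ord_max * \sum_(j < m) A0 i j * (rho j - qs q j / q ord_max).
    rewrite big_ord_recr /= Aext_iwmax mulr_sumr.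
    rewrite [RHS](eq_bigr (fun j => A0 i j * x t0 (iw j)
                 - (qs q j / q ord_max * A0 i j) * x t0 ord_max)); last first.
      by move=> j _; rewrite /rho; field; rewrite hqn xn0.
    rewrite sumrB mulNr mulr_suml.
    by congr (_ - _); apply: eq_bigr => j _; rewrite -[widen_ord _ j]/(iw j) Aext_iw.
  have hXi i : XA (Aext q A0) (x t0) (iw i) = x t0 (iw i) *
      (x t0 ord_max * \sum_(j < m) A0 i j * (rho j - qs q j / q ord_max) - T).
    by rewrite /XA -hP.
  rewrite hXn.
  have C := @core R m q hq1 hqn A0 Qb d hQb hskew rho.
  transitivity (x t0 ord_max * 0); last by rewrite mulr0.
  rewrite -[X in _ = _ * X]C mulr_sumr -big_split.
  apply: eq_bigr => i _ /=.
  have sc : forall a b : R, a *: b = a * b by [].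
  rewrite !sc hXi /rho.
  field.
  by rewrite ?hqn ?xn0 ?xi0.
Qed.
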